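(* Let $n,m\ge 5$ be integers with $m\equiv 1\pmod 4$ and $n\equiv 2\pmod 4$. Then $\gamma_t(C_n\times C_m)\le\frac{(n+2)(m+1)}{4}-3$ and $\gamma_p(C_n\times C_m)\le\frac{(n+2)(m+1)}{4}-2$.
   Context: All graphs are finite, simple and undirected. $C_n$ denotes the cycle of order $n$ and $G\times H$ the Cartesian product of graphs. For a graph $G$ without isolated vertices: a set $D\subseteq V(G)$ is a total dominating set if every vertex of $G$ (including those in $D$) has a neighbour in $D$; $\gamma_t(G)$ is the minimum size of a total dominating set. A set $D\subseteq V(G)$ is a paired dominating set if every vertex outside $D$ has a neighbour in $D$ and the induced subgraph $G[D]$ has a perfect matching; $\gamma_p(G)$ is the minimum size of a paired dominating set. *)

(* Defs.v *)
From mathcomp Require Import all_boot.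
Set Implicit Arguments. Unset Strict Implicit. Unset Printing Implicit Defensive.

Definition cycle_adj (n : nat) : rel 'I_n :=
  fun i j => (val j == (val i).+1 %% n) || (val i == (val j).+1 %% n).

Definition cart_adj (T1 T2 : finType) (e1 : rel T1) (e2 : rel T2) : rel (T1 * T2) :=
  fun x y => ((x.1 == y.1) && e2 x.2 y.2) || ((x.2 == y.2) && e1 x.1 y.1).

Definition torus_adj (n m : nat) : rel ('I_n * 'I_m) :=
  cart_adj (@cycle_adj n) (@cycle_adj m).

Definition total_dominating (T : finType) (e : rel T) (D : {set T}) : bool :=
  [forall x, [exists y in D, e x y]].

Definition dominating (T : finType) (e : rel T) (D : {set T}) : bool :=
  [forall x, (x \notin D) ==> [exists y in D, e x y]].

Definition has_perfect_matching_on (T : finType) (e : rel T) (D : {set T}) : bool :=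
  [exists M : {set {set T}},
     partition M D &&
     [forall B in M, [exists u, [exists v, (B == [set u; v]) && e u v]]]].

Definition paired_dominating (T : finType) (e : rel T) (D : {set T}) : bool :=
  dominating e D && has_perfect_matching_on e D.

(* Minimum size of a set satisfying P (default #|T| if none exists). *)
Definition min_card (T : finType) (P : pred {set T}) : nat :=
  \big[minn/#|T|]_(D : {set T} | P D) #|D|.

Definition gamma_t (T : finType) (e : rel T) : nat := min_card (total_dominating e).
Definition gamma_p (T : finType) (e : rel T) : nat := min_card (paired_dominating e).

(* Main.v *)
Require Import Defs.
From mathcomp Require Import all_boot.
From mathcomp Require Import zify.
Set Implicit Arguments. Unset Strict Implicit. Unset Printing Implicit Defensive.

Definition dn (n i : nat) := if i.+1 == n then 0 else i.+1.
Definition up (n i : nat) := if i == 0 then n.-1 else i.-1.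

Lemma dn_lt n i : i < n -> dn n i < n.
Proof. rewrite /dn; case: ifP => /eqP; lia. Qed.
Lemma up_lt n i : i < n -> up n i < n.
Proof. rewrite /up; case: ifP => /eqP; lia. Qed.
Lemma dn_mod n i : i < n -> dn n i = i.+1 %% n.
Proof.
rewrite /dn; case: ifP => [/eqP ->|/eqP H] Hi; first by rewrite modnn.
by rewrite modn_small //; lia.
Qed.
Lemma up_mod n i : i < n -> (up n i).+1 %% n = i.
Proof.
rewrite /up; case: ifP => [/eqP ->|/eqP H] Hi; first by rewrite prednK ?modnn //; lia.
by rewrite prednK ?modn_small //; lia.
Qed.
Lemma updn n i : i < n -> up n (dn n i) = i.
Proof. rewrite /up /dn; case: (i.+1 =P n) => H1 /=; lia. Qed.
Lemma dnup n i : i < n -> dn n (up n i) = i.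
Proof. rewrite /up /dn; case: (i =P 0) => H1 /=; case: eqP => H2; lia. Qed.

Definition dnO n (i : 'I_n) : 'I_n := Ordinal (dn_lt (ltn_ord i)).
Definition upO n (i : 'I_n) : 'I_n := Ordinal (up_lt (ltn_ord i)).

Lemma cyc_dn n (i : 'I_n) : cycle_adj i (dnO i).
Proof. by rewrite /cycle_adj /= dn_mod // eqxx. Qed.
Lemma cyc_up n (i : 'I_n) : cycle_adj i (upO i).
Proof. by rewrite /cycle_adj /= up_mod // eqxx orbT. Qed.

Lemma total_gen n m (P : nat -> nat -> bool) :
  (forall i j, i < n -> j < m ->
     [|| P (dn n i) j, P (up n i) j, P i (dn m j) | P i (up m j)]) ->
  total_dominating (@torus_adj n m) [set x : 'I_n * 'I_m | P x.1 x.2].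
Proof.
move=> H; apply/forallP => -[i j].
case/or4P: (H i j (ltn_ord i) (ltn_ord j)) => Hp; apply/existsP.
- exists (dnO i, j); rewrite inE /= Hp /torus_adj /cart_adj /= eqxx cyc_dn.
  by rewrite orbT.
- exists (upO i, j); rewrite inE /= Hp /torus_adj /cart_adj /= eqxx cyc_up.
  by rewrite orbT.
- by exists (i, dnO j); rewrite inE /= Hp /torus_adj /cart_adj /= eqxx cyc_dn.
- by exists (i, upO j); rewrite inE /= Hp /torus_adj /cart_adj /= eqxx cyc_up.
Qed.

Lemma total_dom (T : finType) (e : rel T) (D : {set T}) : total_dominating e D -> dominating e D.
Proof.
by move/forallP=> H; apply/forallP => x; apply/implyP => _; apply: H.
Qed.

Lemma min_card_le (T : finType) (P : pred {set T}) D : P D -> min_card P <= #|D|.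
Proof.
move=> HD; rewrite /min_card.
have: D \in index_enum {set T} by rewrite mem_index_enum.
elim: (index_enum _) => // y r IH; rewrite inE big_cons.
case/orP => [/eqP <- | Hr]; first by rewrite HD geq_minl.
case: ifP => _; last exact: IH.
by rewrite geq_min IH ?orbT.
Qed.

Lemma match_gen n m (P top : nat -> nat -> bool) :
  (forall i j, i < n -> j < m -> P i j ->
    if top i j then P (dn n i) j && ~~ top (dn n i) j
    else P (up n i) j && top (up n i) j) ->
  has_perfect_matching_on (@torus_adj n m) [set x : 'I_n * 'I_m | P x.1 x.2].
Proof.
move=> H; set D := [set x : 'I_n * 'I_m | P x.1 x.2].
pose pr (x : 'I_n * 'I_m) :=
  if top x.1 x.2 then (dnO x.1, x.2) else (upO x.1, x.2).
have prD x : x \in D -> pr x \in D /\ pr (pr x) = x.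
  move: x => [i j]; rewrite inE /= => Hx.
  have:= H i j (ltn_ord i) (ltn_ord j) Hx; rewrite /pr /=.
  case: ifP => Ht /andP [HP Ht'].
  - rewrite inE /= HP (negbTE Ht'); split => //; congr pair; apply: val_inj.
    by rewrite /= updn.
  - rewrite inE /= HP Ht'; split => //; congr pair; apply: val_inj.
    by rewrite /= dnup.
have adj x : torus_adj x (pr x).
  rewrite /pr; case: ifP => _;
  by rewrite /torus_adj /cart_adj /= eqxx ?cyc_dn ?cyc_up orbT.
have key u (Hu : u \in D) w : w \in [set u; pr u] -> [set u; pr u] = [set w; pr w].
  rewrite in_set2 => /orP [/eqP -> // | /eqP ->].
  by rewrite (prD u Hu).2 setUC.
apply/existsP; exists [set [set x; pr x] | x in D].
apply/andP; split.
  apply/and3P; split.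
  - apply/eqP/setP => y; rewrite cover_imset; apply/bigcupP/idP.
      case=> x Hx; rewrite in_set2 => /orP [/eqP -> // | /eqP ->].
      exact: (prD x Hx).1.
    by move=> Hy; exists y => //; rewrite in_set2 eqxx.
  - apply/trivIsetP => A B /imsetP [x Hx ->] /imsetP [y Hy ->] Hne.
    rewrite -setI_eq0; apply/eqP/setP => z; rewrite [in RHS]inE.
    apply/negbTE; apply: contra Hne; rewrite inE => /andP [Hzx Hzy].
    by rewrite (key x Hx z Hzx) (key y Hy z Hzy).
  - apply/imsetP => -[x Hx] /setP /(_ x); rewrite !inE eqxx //.
apply/forallP => B; apply/implyP => /imsetP [x Hx ->].
apply/existsP; exists x; apply/existsP; exists (pr x).
by rewrite eqxx adj.
Qed.

Lemma ord_pair_eq n m (x y : 'I_n * 'I_m) :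
  val x.1 = val y.1 -> val x.2 = val y.2 -> x = y.
Proof. by case: x y => [i j] [i' j'] /= /val_inj -> /val_inj ->. Qed.

Lemma card_gen n m (A : {set 'I_n * 'I_m}) (g : nat -> nat -> nat * nat)
    (h : nat * nat -> nat * nat) N1 N2 :
  (forall x, x \in A -> [/\ (g x.1 x.2).1 < N1, (g x.1 x.2).2 < N2
       & h (g x.1 x.2) = (val x.1, val x.2)]) ->
  #|A| <= N1 * N2.
Proof.
move=> Hr; rewrite cardE.
pose G (x : 'I_n * 'I_m) := g x.1 x.2.
have U : uniq (map G (enum A)).
  rewrite map_inj_in_uniq ?enum_uniq // => x y; rewrite !mem_enum => Hx Hy E.
  have [_ _ Hx'] := Hr x Hx; have [_ _ Hy'] := Hr y Hy.
  move: Hx'; rewrite /G in E; rewrite E Hy' => -[E1 E2].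
  by apply: ord_pair_eq.
have S : {subset map G (enum A) <= [seq (p, q) | p <- iota 0 N1, q <- iota 0 N2]}.
  move=> z /mapP [x]; rewrite mem_enum => Hx ->; case: (Hr x Hx) => h1 h2 _.
  apply/allpairsP; exists ((G x).1, (G x).2); rewrite !mem_iota /=.
  by split; rewrite /G ?add0n ?h1 ?h2 //; case: (g _ _).
rewrite -(size_map G); apply: leq_trans (uniq_leq_size U S) _.
by rewrite size_allpairs !size_iota.
Qed.


Ltac dec_atom :=
  match goal with
  | |- context [if ?c then _ else _] =>
      let H := fresh "H" in
      first [ have H : c = true by lia | have H : c = false by lia ];
      rewrite H /=; clear H
  | |- context [?x <= ?y] =>
      let H := fresh "H" in
      first [ have H : (x <= y) = true by lia | have H : (x <= y) = false by lia ];
      rewrite H /=; clear H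
  | |- context [?x == ?y] =>
      let T := type of x in unify T nat;
      let H := fresh "H" in
      first [ have H : (x == y) = true by lia | have H : (x == y) = false by lia ];
      rewrite H /=; clear H
  end.
Ltac decide_all := repeat dec_atom; done.

Lemma rows a i : 0 < a -> i < 4*a+2 ->
  i = 0 \/ i = 1 \/ ((2 <= i <= 4*a-3) /\ i %% 4 = 0) \/ ((2 <= i <= 4*a-3) /\ i %% 4 = 1) \/
      ((2 <= i <= 4*a-3) /\ i %% 4 = 2) \/ ((2 <= i <= 4*a-3) /\ i %% 4 = 3) \/
      i = 4*a-2 \/ i = 4*a-1 \/ i = 4*a \/ i = 4*a+1.
Proof. move=> *. lia. Qed.
Lemma cols b j : 0 < b -> j < 4*b+1 ->
  j = 0 \/ j = 1 \/ ((2 <= j <= 4*b-5) /\ j %% 4 = 0) \/ ((2 <= j <= 4*b-5) /\ j %% 4 = 1) \/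
      ((2 <= j <= 4*b-5) /\ j %% 4 = 2) \/ ((2 <= j <= 4*b-5) /\ j %% 4 = 3) \/
      (j = 4*b-4 /\ 1 < b) \/ (j = 4*b-3 /\ 1 < b) \/ j = 4*b-2 \/ j = 4*b-1 \/ j = 4*b.
Proof. move=> *. lia. Qed.

Ltac split_or := repeat match goal with H : _ \/ _ |- _ => destruct H end;
  repeat match goal with H : _ /\ _ |- _ => destruct H end.

Definition PA a i := ((i %% 4 <= 1) && (i <= 4*a)) || (i == 4*a-1).
Definition PB a i := [|| (2 <= i %% 4) && (i < 4*a), (i == 4*a+1) | (i == 0)].
Definition PB' a i := [|| (2 <= i %% 4) && (i < 4*a), (i == 4*a) | (i == 4*a+1)].
Definition PC a i := (i %% 4 <= 1) && (i < 4*a).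
Definition PCt a i := PA a i && (i != 0) && (i != 4*a-1).
Definition PA0 a i := PA a i && (i != 0).
Definition tA a i := ((i %% 4 == 0) && (i < 4*a)) || (i == 4*a-1).
Definition tB a i := ((i %% 4 == 2) && (i < 4*a)) || (i == 4*a+1).
Definition tB' a i := ((i %% 4 == 2) && (i < 4*a)) || (i == 4*a).
Definition tC a i := (i %% 4 == 0) && (i < 4*a).
Definition ciA a i := if i == 4*a-1 then 2*a else if i == 4*a then 2*a+1 else 2*(i %/ 4) + i %% 4.
Definition ciB a i := if i == 0 then 2*a else if i == 4*a+1 then 2*a+1 else if i == 4*a then 2*a
        else 2*(i %/ 4) + i %% 4 - 2.
Definition invA a c := if c == 2*a then 4*a-1 else if c == 2*a+1 then 4*a else 4*(c %/ 2) + c %% 2.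
Definition invB a c := if c == 2*a+1 then 4*a+1 else if c == 2*a then 0 else 4*(c %/2) + c %% 2 + 2.
Definition invB' a c := if c == 2*a+1 then 4*a+1 else if c == 2*a then 4*a else 4*(c %/2) + c %% 2 + 2.

Definition sel a k i := match k with 1 => PA a i | 2 => PB a i | 3 => PB' a i | 4 => PC a i | _ => false end.
Definition tsel a k i := match k with 1 => tA a i | 2 => tB a i | 3 => tB' a i | 4 => tC a i | _ => false end.
Definition csel a k i := match k with 2 => ciB a i | 3 => ciB a i | _ => ciA a i end.
Definition isel a k c := match k with 2 => invB a c | 3 => invB' a c | _ => invA a c end.
Definition bsel a k := if k == 4 then 2*a else 2*a+2.

Definition selt a k i := match k with 1 => PA a i | 2 => PB a i | 4 => PCt a i | 5 => PA0 a i | _ => false end.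
Definition cit a k i := match k with 2 => ciB a i | 4 => if i == 4*a then 0 else ciA a i
  | 5 => (ciA a i).-1 | _ => ciA a i end.
Definition ivt a k c := match k with 2 => invB a c | 4 => if c == 0 then 4*a else invA a c
  | 5 => invA a c.+1 | _ => invA a c end.
Definition bt a k := match k with 4 => 2*a | 5 => 2*a+1 | _ => 2*a+2 end.

Definition Lp := [:: (0, 1, 0); (0, 2, 0); (0, 3, 0); (0, 4, 1); (1, 0, 2); (1, 0, 3); (2, 0, 1); (3, 0, 4); (4, 1, 0)].
Definition Lt := [:: (0, 1, 0); (0, 2, 0); (0, 4, 5); (1, 0, 2); (2, 0, 1); (2, 0, 4); (4, 5, 0); (5, 0, 2)].

Lemma row_tot_p a l c r i : 0 < a -> i < 4*a+2 -> (l, c, r) \in Lp ->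
  [|| sel a c (dn (4*a+2) i), sel a c (up (4*a+2) i), sel a l i | sel a r i].
Proof.
move=> Ha Hi; rewrite !inE.
repeat (case/orP; first by move/eqP => [-> -> ->]; have := rows Ha Hi; move=> R; split_or; try subst i;
        rewrite /= /dn /up /PA /PB /PB' /PC; decide_all).
by move/eqP => [-> -> ->]; have := rows Ha Hi; move=> R; split_or; try subst i;
        rewrite /= /dn /up /PA /PB /PB' /PC; decide_all.
Qed.

Ltac rowcase Ha Hi i := have := rows Ha Hi; move=> R; split_or; try subst i.

Lemma row_tot_t a l c r i : 0 < a -> i < 4*a+2 -> (l, c, r) \in Lt ->
  [|| selt a c (dn (4*a+2) i), selt a c (up (4*a+2) i), selt a l i | selt a r i].
Proof.
move=> Ha Hi; rewrite !inE.
repeat (case/orP; first by move/eqP => [-> -> ->]; rowcase Ha Hi i;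
        rewrite /= /dn /up /PCt /PA0 /PA /PB; decide_all).
by move/eqP => [-> -> ->]; rowcase Ha Hi i; rewrite /= /dn /up /PCt /PA0 /PA /PB; decide_all.
Qed.

Lemma row_match a k i : 0 < a -> i < 4*a+2 -> sel a k i ==>
  (if tsel a k i then sel a k (dn (4*a+2) i) && ~~ tsel a k (dn (4*a+2) i)
  else sel a k (up (4*a+2) i) && tsel a k (up (4*a+2) i)).
Proof.
move=> Ha Hi; case: k => [|[|[|[|[|k]]]]] //=; rowcase Ha Hi i;
  rewrite /dn /up /PA /PB /PB' /PC /tA /tB /tB' /tC; decide_all.
Qed.

Lemma row_card_p a k i : 0 < a -> i < 4*a+2 -> sel a k i ==>
  (csel a k i < bsel a k) && (isel a k (csel a k i) == i).
Proof.
move=> Ha Hi; case: k => [|[|[|[|[|k]]]]] //=; rowcase Ha Hi i;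
  rewrite /bsel /PA /PB /PB' /PC /ciA /ciB /invA /invB /invB'; decide_all.
Qed.

Lemma row_card_t a k i : 0 < a -> i < 4*a+2 -> selt a k i ==>
  (cit a k i < bt a k) && (ivt a k (cit a k i) == i).
Proof.
move=> Ha Hi; case: k => [|[|[|[|[|[|k]]]]]] //=; rowcase Ha Hi i;
  rewrite /PCt /PA0 /PA /PB /ciA /ciB /invA /invB; decide_all.
Qed.

Definition ct b j := if j == 4*b then 4 else if j %% 2 == 1 then 0
  else if j %% 4 == 0 then 1 else if j == 4*b-2 then 3 else 2.
Definition ctt b j := if j == 4*b then 4 else if j %% 2 == 1 then 0
  else if j == 0 then 5 else if j %% 4 == 0 then 1 else 2.

Ltac split_atom :=
  match goal with
  | |- context [?x == ?y] =>
      let T := type of x in unify T nat; case: (x =P y) => ?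
  end.
Ltac decide_split := repeat (first [dec_atom | split_atom]); done.

Ltac colcase Hb Hj j := have := cols Hb Hj; move=> C; split_or; try subst j.

Lemma col_tot_p b j : 0 < b -> j < 4*b+1 ->
  (ct b (up (4*b+1) j), ct b j, ct b (dn (4*b+1) j)) \in Lp.
Proof. move=> Hb Hj; colcase Hb Hj j; rewrite /Lp /Lt /ct /dn /up; decide_split. Qed.

Lemma col_tot_t b j : 0 < b -> j < 4*b+1 ->
  (ctt b (up (4*b+1) j), ctt b j, ctt b (dn (4*b+1) j)) \in Lt.
Proof. move=> Hb Hj; colcase Hb Hj j; rewrite /Lp /Lt /ctt /dn /up; decide_split. Qed.

Lemma col_p b j : 0 < b -> j < 4*b+1 ->
  ((ct b j != 0) ==> (j %% 2 == 0)) && ((ct b j == 4) == (j == 4*b)).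
Proof. move=> Hb Hj; colcase Hb Hj j; rewrite /ct; decide_split. Qed.

Lemma col_t b j : 0 < b -> j < 4*b+1 ->
  [&& (ctt b j != 0) ==> (j %% 2 == 0), (ctt b j == 4) == (j == 4*b)
    & (ctt b j == 5) == (j == 0)].
Proof. move=> Hb Hj; colcase Hb Hj j; rewrite /ctt; decide_split. Qed.

Definition Dp a b := [set x : 'I_(4*a+2) * 'I_(4*b+1) | sel a (ct b x.2) x.1].
Definition Dt a b := [set x : 'I_(4*a+2) * 'I_(4*b+1) | selt a (ctt b x.2) x.1].

Lemma Dp_total a b : 0 < a -> 0 < b -> total_dominating (@torus_adj _ _) (Dp a b).
Proof.
move=> Ha Hb; apply: (@total_gen _ _ (fun i j => sel a (ct b j) i)) => i j Hi Hj /=.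
case/or4P: (row_tot_p Ha Hi (col_tot_p Hb Hj)) => ->; by rewrite ?orbT.
Qed.

Lemma Dt_total a b : 0 < a -> 0 < b -> total_dominating (@torus_adj _ _) (Dt a b).
Proof.
move=> Ha Hb; apply: (@total_gen _ _ (fun i j => selt a (ctt b j) i)) => i j Hi Hj /=.
case/or4P: (row_tot_t Ha Hi (col_tot_t Hb Hj)) => ->; by rewrite ?orbT.
Qed.

Lemma Dp_match a b : 0 < a -> 0 < b -> has_perfect_matching_on (@torus_adj _ _) (Dp a b).
Proof.
move=> Ha Hb.
apply: (@match_gen _ _ (fun i j => sel a (ct b j) i) (fun i j => tsel a (ct b j) i)).
move=> i j Hi Hj /= HP; exact: (implyP (row_match (ct b j) Ha Hi) HP).
Qed.

Lemma bsel_le a k : bsel a k <= 2*a+2.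
Proof. rewrite /bsel; case: ifP => _; lia. Qed.
Lemma bt_le a k : bt a k <= 2*a+2.
Proof. by case: k => [|[|[|[|[|[|k]]]]]] /=; lia. Qed.

Lemma Dp_card a b : 0 < a -> 0 < b -> #|Dp a b| <= 2*b*(2*a+2) + 2*a.
Proof.
move=> Ha Hb.
set S := [set x : 'I_(4*a+2) * 'I_(4*b+1) | x.2 < 4*b].
rewrite -(cardsID S (Dp a b)); apply: leq_add.
- apply: (@card_gen _ _ _ (fun i j => (j %/ 2, csel a (ct b j) i))
           (fun c => (isel a (ct b (2 * c.1)) c.2, 2 * c.1))) => -[i j].
  rewrite !inE /= => /andP [HP Hj].
  have /andP [/implyP He _] := col_p Hb (ltn_ord j).
  have Hk : ct b j != 0 by apply/negP => /eqP E; rewrite E in HP.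
  have /eqP E2 := He Hk.
  have Ej : 2 * (j %/ 2) = j by lia.
  have /andP [Hc /eqP Hinv] := implyP (row_card_p (ct b j) Ha (ltn_ord i)) HP.
  split; first lia.
  + by apply: leq_trans Hc (bsel_le _ _).
  + by rewrite Ej Hinv.
- rewrite -(mul1n (2*a)).
  apply: (@card_gen _ _ _ (fun i j => (0, csel a 4 i))
           (fun c => (isel a 4 c.2, 4*b))) => -[i j].
  rewrite !inE /= => /andP [Hj HP].
  have /andP [_ /eqP E4] := col_p Hb (ltn_ord j).
  have Ej : (j : nat) = 4*b by have := ltn_ord j; lia.
  have Ek : ct b j = 4 by apply/eqP; rewrite E4 Ej.
  rewrite Ek in HP.
  have /andP [Hc /eqP Hinv] := implyP (row_card_p 4 Ha (ltn_ord i)) HP.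
  move: Hc Hinv => /= Hc Hinv.
  by split => //; rewrite Hinv Ej.
Qed.

Lemma Dt_card a b : 0 < a -> 0 < b -> #|Dt a b| <= (2*a+1) + ((2*b-1)*(2*a+2) + 2*a).
Proof.
move=> Ha Hb.
set S0 := [set x : 'I_(4*a+2) * 'I_(4*b+1) | x.2 == 0 :> nat].
set S1 := [set x : 'I_(4*a+2) * 'I_(4*b+1) | x.2 < 4*b].
rewrite -(cardsID S0 (Dt a b)); apply: leq_add.
  rewrite -(mul1n (2*a+1)).
  apply: (@card_gen _ _ _ (fun i j => (0, cit a 5 i))
           (fun c => (ivt a 5 c.2, 0))) => -[i j].
  rewrite !inE /= => /andP [HP /eqP Hj].
  have /and3P [_ _ /eqP E5] := col_t Hb (ltn_ord j).
  have Ek : ctt b j = 5 by apply/eqP; rewrite E5 Hj.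
  rewrite Ek in HP.
  have /andP [Hc /eqP Hinv] := implyP (row_card_t 5 Ha (ltn_ord i)) HP.
  move: Hc Hinv => /= Hc Hinv.
  by split => //; rewrite Hinv Hj.
rewrite -(cardsID S1 (Dt a b :\: S0)); apply: leq_add.
- apply: (@card_gen _ _ _ (fun i j => (j %/ 2 - 1, cit a (ctt b j) i))
           (fun c => (ivt a (ctt b (2 * c.1 + 2)) c.2, 2 * c.1 + 2))) => -[i j].
  rewrite !inE /= => /andP [/andP [Hj0 HP] Hj].
  have /and3P [/implyP He _ _] := col_t Hb (ltn_ord j).
  have Hk : ctt b j != 0 by apply/negP => /eqP E; rewrite E in HP.
  have /eqP E2 := He Hk.
  have Ej : 2 * (j %/ 2 - 1) + 2 = j by lia.
  have /andP [Hc /eqP Hinv] := implyP (row_card_t (ctt b j) Ha (ltn_ord i)) HP.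
  split; first lia.
  + by apply: leq_trans Hc (bt_le _ _).
  + by rewrite Ej Hinv.
- rewrite -(mul1n (2*a)).
  apply: (@card_gen _ _ _ (fun i j => (0, cit a 4 i))
           (fun c => (ivt a 4 c.2, 4*b))) => -[i j].
  rewrite !inE /= => /andP [Hj /andP [Hj0 HP]].
  have /and3P [_ /eqP E4 _] := col_t Hb (ltn_ord j).
  have Ej : (j : nat) = 4*b by have := ltn_ord j; lia.
  have Ek : ctt b j = 4 by apply/eqP; rewrite E4 Ej.
  rewrite Ek in HP.
  have /andP [Hc /eqP Hinv] := implyP (row_card_t 4 Ha (ltn_ord i)) HP.
  move: Hc Hinv => /= Hc Hinv.
  by split => //; rewrite Hinv Ej.
Qed.

Theorem corollary5p1 (n m : nat) :
  5 <= n -> 5 <= m -> m %% 4 = 1 -> n %% 4 = 2 ->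
  gamma_t (@torus_adj n m) <= (n + 2) * (m + 1) %/ 4 - 3 /\
  gamma_p (@torus_adj n m) <= (n + 2) * (m + 1) %/ 4 - 2.
Proof.
move=> Hn Hm Hm4 Hn4.
have [a [En Ha]] : exists a, n = 4*a+2 /\ 0 < a by exists (n %/ 4); lia.
have [b [Em Hb]] : exists b, m = 4*b+1 /\ 0 < b by exists (m %/ 4); lia.
subst n m.
have -> : (4*a+2+2) * (4*b+1+1) %/ 4 = (a+1)*(4*b+2).
  have -> : (4*a+2+2) * (4*b+1+1) = 4 * ((a+1)*(4*b+2)) by nia.
  by rewrite mulKn.
split.
- apply: leq_trans (min_card_le (Dt_total Ha Hb)) _.
  apply: leq_trans (Dt_card Ha Hb) _; nia.
- have HP : paired_dominating (@torus_adj _ _) (Dp a b).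
    by rewrite /paired_dominating total_dom ?Dp_total ?Dp_match.
  apply: leq_trans (min_card_le HP) _.
  apply: leq_trans (Dp_card Ha Hb) _; nia.
Qed.
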